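(* For every integer $k\ge 1$ and all FDSs $A,B$, if $A^k=B^k$ then $A=B$.
   Context: A finite dynamical system (FDS) is a function $A:S_A\to S_A$ on a finite set $S_A$, considered up to isomorphism of functional graphs (vertex set $S_A$, arcs $x\to A(x)$). The product $AB$ is the function on $S_A\times S_B$ given by $(a,b)\mapsto(A(a),B(b))$, and $A^k$ denotes the $k$-fold product $A\times\cdots\times A$ (not the iterate/composition). *)

(* Defs.v *)
From mathcomp Require Import all_boot.
Set Implicit Arguments. Unset Strict Implicit. Unset Printing Implicit Defensive.

(* A finite dynamical system (FDS) is a function f : T -> T on a finite type T. *)

Definition fds_iso (T U : finType) (f : T -> T) (g : U -> U) : Prop :=
  exists h : T -> U, bijective h /\ forall x, h (f x) = g (h x).

Definition fds_prod (T U : finType) (f : T -> T) (g : U -> U) : T * U -> T * U :=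
  fun p => (f p.1, g p.2).

(* k-fold product A^k (NOT the k-th iterate): acts componentwise on
   T^k = {ffun 'I_k -> T}. *)
Definition fds_pow {T : finType} (k : nat) (f : T -> T)
  : {ffun 'I_k -> T} -> {ffun 'I_k -> T} :=
  fun x => [ffun i => f (x i)].
Arguments fds_pow {T} k f x.

(* Main.v *)
Require Import Defs.
From mathcomp Require Import all_boot.
Set Implicit Arguments. Unset Strict Implicit. Unset Printing Implicit Defensive.

Definition homs (S T : finType) (F : S -> S) (f : T -> T) : {set {ffun S -> T}} :=
  [set h : {ffun S -> T} | [forall x, h (F x) == f (h x)]].
Definition injs (S T : finType) (F : S -> S) (f : T -> T) : {set {ffun S -> T}} :=
  [set h in homs F f | injectiveb h].
Definition kerset (S T : finType) (h : {ffun S -> T}) : {set S * S} :=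
  [set p | h p.1 == h p.2].

Lemma homsP (S T : finType) (F : S -> S) (f : T -> T) (h : {ffun S -> T}) :
  reflect (forall x, h (F x) = f (h x)) (h \in homs F f).
Proof.
rewrite inE; apply: (iffP forallP) => H x; first exact/eqP.
exact/eqP.
Qed.

Lemma iso_sym (T1 T2 : finType) (f1 : T1 -> T1) (f2 : T2 -> T2) :
  fds_iso f1 f2 -> fds_iso f2 f1.
Proof.
move=> [h [hb hc]]; have [g hg gh] := hb.
exists g; split; first by exists h.
move=> y; apply: (bij_inj hb); by rewrite gh hc gh.
Qed.

Lemma iso_le (S T1 T2 : finType) (F : S -> S) (f1 : T1 -> T1) (f2 : T2 -> T2) :
  fds_iso f1 f2 -> #|homs F f1| <= #|homs F f2|.
Proof.
move=> [p [pb pc]].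
pose M (h : {ffun S -> T1}) : {ffun S -> T2} := [ffun x => p (h x)].
have Minj : injective M.
  move=> h1 h2 /ffunP E; apply/ffunP => x; move: (E x); rewrite !ffunE.
  exact: (bij_inj pb).
rewrite -(card_imset _ Minj); apply: subset_leq_card.
apply/subsetP => _ /imsetP [h /homsP hh ->]; apply/homsP => x.
by rewrite !ffunE hh pc.
Qed.

Lemma pow_count (S T : finType) (F : S -> S) (k : nat) (f : T -> T) :
  #|homs F (fds_pow k f)| = #|homs F f| ^ k.
Proof.
pose tr (phi : {ffun S -> {ffun 'I_k -> T}}) : {ffun 'I_k -> {ffun S -> T}} :=
  [ffun i => [ffun x => phi x i]].
have trinj : injective tr.
  move=> p1 p2 /ffunP E; apply/ffunP => x; apply/ffunP => i.
  by move: (E i) => /ffunP /(_ x); rewrite !ffunE.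
rewrite -(card_imset _ trinj).
have -> : #|homs F f| ^ k = #|homs F f| ^ #|'I_k| by rewrite card_ord.
rewrite -card_ffun_on.
apply: eq_card => psi; apply/imsetP/ffun_onP.
  move=> [phi /homsP hp ->] i; apply/homsP => x.
  by rewrite !ffunE hp /fds_pow ffunE.
move=> H; exists [ffun x => [ffun i => psi i x]].
  apply/homsP => x; apply/ffunP => i; rewrite /fds_pow !ffunE.
  by move: (H i) => /homsP ->.
by apply/ffunP => i; apply/ffunP => x; rewrite !ffunE.
Qed.

Lemma card_part (X Y : finType) (A : {set X}) (p : X -> Y) :
  #|A| = \sum_(y : Y) #|[set x in A | p x == y]|.
Proof.
rewrite -sum1_card (partition_big p xpredT) //=.
apply: eq_bigr => y _; rewrite -sum1_card; apply: eq_bigl => x.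
by rewrite !inE.
Qed.

Lemma kerset_diag (S T : finType) (h : {ffun S -> T}) :
  (kerset h == [set p : S * S | p.1 == p.2]) = injectiveb h.
Proof.
apply/eqP/injectiveP.
  move=> E x y hxy; have : (x, y) \in kerset h by rewrite inE /= hxy.
  by rewrite E inE => /eqP.
move=> hi; apply/setP => -[x y]; rewrite !inE /=.
by apply/eqP/eqP => [/hi|->].
Qed.

Section Quot.
Variables (S T0 : finType) (F : S -> S) (f0 : T0 -> T0) (h0 : {ffun S -> T0}).
Hypothesis hh : forall x, h0 (F x) = f0 (h0 x).

Lemma codomF y : y \in codom h0 -> f0 y \in codom h0.
Proof. by move=> /codomP [x ->]; rewrite -hh codom_f. Qed.

Definition Qt := {y : T0 | y \in codom h0}.
Definition FQ (q : Qt) : Qt := exist _ (f0 (val q)) (codomF (valP q)).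
Definition piQ (x : S) : Qt := exist _ (h0 x) (codom_f h0 x).

Lemma piQ_surj (q : Qt) : exists x, q = piQ x.
Proof.
case: q => y hy; have [x ex] := codomP hy.
by exists x; apply: val_inj => /=.
Qed.

Lemma piQF x : piQ (F x) = FQ (piQ x).
Proof. by apply: val_inj => /=; rewrite hh. Qed.

Lemma class_count (T : finType) (f : T -> T) :
  #|[set h in homs F f | kerset h == kerset h0]| = #|injs FQ f|.
Proof.
pose M (phi : {ffun Qt -> T}) : {ffun S -> T} := [ffun x => phi (piQ x)].
have Minj : injective M.
  move=> p1 p2 /ffunP E; apply/ffunP => q; have [x ->] := piQ_surj q.
  by move: (E x); rewrite !ffunE.
rewrite -(card_imset _ Minj); apply: eq_card => h; apply/idP/imsetP.
  rewrite inE => /andP [/homsP hom /eqP K].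
  have K' : forall x y, (h x == h y) = (h0 x == h0 y).
    move=> x y; move/setP: K => /(_ (x, y)).
    by rewrite /kerset !inE.
  pose r (q : Qt) : S := iinv (valP q).
  have hr q : h0 (r q) = val q by rewrite /r f_iinv.
  exists [ffun q => h (r q)].
    rewrite /injs inE; apply/andP; split.
      apply/homsP => q; rewrite !ffunE -hom; apply/eqP.
      by rewrite K' hh !hr.
    apply/injectiveP => q1 q2; rewrite !ffunE => /eqP.
    by rewrite K' !hr => /eqP /val_inj.
  apply/ffunP => x; rewrite !ffunE; apply/eqP.
  by rewrite K' hr.
move=> [phi] /[swap] -> /setIdP [/homsP hom /injectiveP phii].
apply/setIdP; split.
  by apply/homsP => x; rewrite !ffunE piQF hom.
apply/eqP/setP => -[x y]; rewrite !inE /= !ffunE (inj_eq phii).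
by [].
Qed.
Lemma card_Qt : #|{: Qt}| = #|codom h0|.
Proof. by rewrite card_sig. Qed.

End Quot.

Lemma inj_count (T U : finType) (f : T -> T) (g : U -> U)
  (H : forall (S : finType) (F : S -> S), #|homs F f| = #|homs F g|) :
  forall n (S : finType) (F : S -> S), #|S| < n -> #|injs F f| = #|injs F g|.
Proof.
elim=> [//|n IH] S F hS.
pose diag := [set p : S * S | p.1 == p.2].
have E := H S F.
rewrite (card_part _ (@kerset S T)) (card_part _ (@kerset S U)) in E.
rewrite [X in X = _](bigD1 diag) // [X in _ = X](bigD1 diag) // in E.
have D : forall (T1 : finType) (f1 : T1 -> T1),
    #|[set h in homs F f1 | kerset h == diag]| = #|injs F f1|.
  by move=> T1 f1; apply: eq_card => h; rewrite /injs !inE kerset_diag.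
rewrite !D in E.
have key : forall (T0 : finType) (f0 : T0 -> T0) (h0 : {ffun S -> T0}),
    h0 \in homs F f0 -> kerset h0 != diag ->
    #|[set h in homs F f | kerset h == kerset h0]| =
    #|[set h in homs F g | kerset h == kerset h0]|.
  move=> T0 f0 h0 /homsP hh nd; rewrite !(class_count hh); apply: IH.
  rewrite card_Qt -ltnS; apply: leq_trans hS; rewrite ltnS.
  rewrite ltn_neqAle leq_image_card andbT; apply/negP => /image_injP hi.
  move/negP: nd; apply; rewrite kerset_diag; apply/injectiveP => x y.
  exact: hi.
suff R : \sum_(i | i != diag) #|[set x in homs F f | kerset x == i]| =
         \sum_(i | i != diag) #|[set x in homs F g | kerset x == i]|.
  by move/eqP: E; rewrite R eqn_add2r => /eqP.
apply: eq_bigr => th nd.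
case: (set_0Vmem [set h in homs F f | kerset h == th]) => [e1|[h0]].
  case: (set_0Vmem [set h in homs F g | kerset h == th]) => [e2|[h0]].
    by rewrite e1 e2 !cards0.
  move=> /setIdP [h0h /eqP K]; rewrite -K in nd *; exact: key h0h nd.
move=> /setIdP [h0h /eqP K]; rewrite -K in nd *; exact: key h0h nd.
Qed.

Theorem mainTheorem3 (k : nat) (T U : finType) (f : T -> T) (g : U -> U) :
  (1 <= k)%N -> fds_iso (fds_pow k f) (fds_pow k g) -> fds_iso f g.
Proof.
move=> k1 iso.
have H : forall (S : finType) (F : S -> S), #|homs F f| = #|homs F g|.
  move=> S F; apply/eqP; rewrite -(eqn_exp2r _ _ k1) -!pow_count eqn_leq.
  by rewrite !iso_le //; apply: iso_sym.
have H' : forall (S : finType) (F : S -> S), #|homs F g| = #|homs F f|.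
  by move=> S F; rewrite H.
have I1 := @inj_count _ _ f g H _ T f (ltnSn _).
have I2 := @inj_count _ _ g f H' _ U g (ltnSn _).
have idin (V : finType) (v : V -> V) : [ffun x => x] \in injs v v.
  apply/setIdP; split; first by apply/homsP => x; rewrite !ffunE.
  by apply/injectiveP => x y; rewrite !ffunE.
have [h1 /setIdP [/homsP h1h /injectiveP h1i]] : exists h, h \in injs f g.
  by apply/set0Pn; rewrite -card_gt0 -I1 card_gt0; apply/set0Pn; exists [ffun x => x]; apply: idin.
have [h2 /setIdP [_ /injectiveP h2i]] : exists h, h \in injs g f.
  by apply/set0Pn; rewrite -card_gt0 -I2 card_gt0; apply/set0Pn; exists [ffun x => x]; apply: idin.
exists h1; split => //; apply: inj_card_bij => //.
exact: leq_card h2i.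
Qed.
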